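(* Let $G=(V,E)$ be an undirected graph (finite or infinite) and $M=M(S)$, $M'=M(S')$ two maximal multiplices of $G$. If $M\cap M'\neq\emptyset$ then $M=M'$.
   Context: A graph $G=(V,E)$ has vertex set $V$ and edge set $E\subseteq V^2$; it is undirected if $E$ is irreflexive and symmetric. Implication classes: on $E$ define $(a,b)\Gamma(a',b')$ iff either $a=a'$ and $(b,b')\notin E$, or $b=b'$ and $(a,a')\notin E$; the classes of the transitive closure $\Gamma^*$ are the implication classes. For an implication class $A$, $A^{-1}=\{(b,a):(a,b)\in A\}$ and the color class is $\widehat A=A\cup A^{-1}$. A simplex of rank $r\ge1$ is a complete sub-graph $S=(V_S,E_S)$ of $G$ on $r+1$ vertices whose distinct undirected edges lie in distinct color classes; it is maximal if not properly contained in a larger simplex. The multiplex generated by $S$ is $M(S)=\bigcup\{\widehat A:\widehat A\text{ a color class},\ \widehat A\cap E_S\neq\emptyset\}$; it is maximal if $S$ is maximal. *)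

(* Defs.v *)
From Stdlib Require Import List Relations.
Import ListNotations.

Section Graphs.
Variable V : Type.
Variable E : V -> V -> Prop.

Definition undirected : Prop :=
  (forall a, ~ E a a) /\ (forall a b, E a b -> E b a).

Definition edge (e : V * V) : Prop := E (fst e) (snd e).

Definition swap (e : V * V) : V * V := (snd e, fst e).

Definition Gamma (e f : V * V) : Prop :=
  edge e /\ edge f /\
  ((fst e = fst f /\ ~ E (snd e) (snd f)) \/
   (snd e = snd f /\ ~ E (fst e) (fst f))).

(* Gamma^* : reflexive-transitive closure (used only on edges; the
   implication classes are the classes of Gamma^* on E). *)
Definition Gstar : relation (V * V) := clos_refl_trans (V * V) Gamma.

Definition impl_class (e : V * V) (f : V * V) : Prop := edge f /\ Gstar f e.

Definition color_class (e : V * V) (f : V * V) : Prop :=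
  impl_class e f \/ impl_class e (swap f).

(* A simplex of rank r >= 1, given by its vertex set S (its edge set is all
   ordered pairs of distinct vertices of S, since it is complete).
   S is finite with r+1 >= 2 elements. *)
Definition simplex (S : V -> Prop) : Prop :=
  (exists l : list V, NoDup l /\ 2 <= length l /\ forall x, S x <-> In x l) /\
  (forall a b, S a -> S b -> a <> b -> E a b) /\
  (forall a b c d, S a -> S b -> S c -> S d -> a <> b -> c <> d ->
     color_class (a, b) (c, d) ->
     (a = c /\ b = d) \/ (a = d /\ b = c)).

Definition maximal_simplex (S : V -> Prop) : Prop :=
  simplex S /\
  ~ (exists T : V -> Prop, simplex T /\ (forall x, S x -> T x) /\
       exists y, T y /\ ~ S y).

Definition multiplex (S : V -> Prop) (f : V * V) : Prop :=
  exists a b, S a /\ S b /\ a <> b /\ color_class (a, b) f.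

End Graphs.

(* Main.v *)
Require Import Defs.
From Stdlib Require Import List Relations.
From Stdlib Require Import Classical.
Import ListNotations.

Definition sc (V : Type) (E : V -> V -> Prop) (e f : V * V) : Prop :=
  Gstar V E e f \/ Gstar V E e (swap V f).

Definition InM (V : Type) (E : V -> V -> Prop) (S : V -> Prop) (e : V * V) : Prop :=
  exists a b, S a /\ S b /\ a <> b /\ sc V E e (a, b).

Arguments sc {V} E e f.
Arguments InM {V} E S e.
Arguments Gstar {V} E _ _.
Arguments Gamma {V} E e f.
Arguments swap {V} e.

Lemma Gamma_sym V E : undirected V E -> forall e f, Gamma E e f -> Gamma E f e.
Proof.
  intros [Hi Hs] [a b] [c d]; unfold Gamma, edge; simpl.
  intros [h1 [h2 [[-> h3]|[-> h3]]]]; repeat split; auto;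
  first [ left; split; auto; intro X; apply h3; apply Hs; auto
        | right; split; auto; intro X; apply h3; apply Hs; auto ].
Qed.


Lemma Gamma_swap V E : undirected V E -> forall e f, Gamma E e f -> Gamma E (swap e) (swap f).
Proof.
  intros [Hi Hs] [a b] [c d]; unfold Gamma, edge, swap; simpl.
  intros [h1 [h2 [[-> h3]|[-> h3]]]]; repeat split; auto;
  first [ left; split; auto; intro X; apply h3; apply Hs; auto
        | right; split; auto; intro X; apply h3; apply Hs; auto ].
Qed.

Lemma Gstar_sym V E : undirected V E -> forall e f, Gstar E e f -> Gstar E f e.
Proof.
  intros HU e f H; induction H.
  - apply rt_step; apply Gamma_sym; auto.
  - apply rt_refl.
  - eapply rt_trans; eauto.
Qed.

Lemma Gstar_swap V E : undirected V E -> forall e f, Gstar E e f -> Gstar E (swap e) (swap f).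
Proof.
  intros HU e f H; induction H.
  - apply rt_step; apply Gamma_swap; auto.
  - apply rt_refl.
  - eapply rt_trans; eauto.
Qed.

Lemma Gstar_trans (V : Type) (E : V -> V -> Prop) : forall e f g, Gstar E e f -> Gstar E f g -> Gstar E e g.
Proof. intros; eapply rt_trans; eauto. Qed.

Lemma swap_swap V (e : V * V) : swap (swap e) = e.
Proof. destruct e; reflexivity. Qed.

Lemma Gstar_swap' V E : undirected V E -> forall e f, Gstar E (swap e) f -> Gstar E e (swap f).
Proof.
  intros HU e f H. rewrite <- (swap_swap V e). apply Gstar_swap; auto.
Qed.

Lemma sc_refl V E e : @sc V E e e.
Proof. left; apply rt_refl. Qed.

Lemma sc_sym V E : undirected V E -> forall e f, @sc V E e f -> sc E f e.
Proof.
  intros HU e f [H|H].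
  - left; apply Gstar_sym; auto.
  - right. apply Gstar_swap' ; auto. apply Gstar_sym; auto.
Qed.

Lemma sc_trans V E : undirected V E -> forall e f g, @sc V E e f -> sc E f g -> sc E e g.
Proof.
  intros HU e f g [H|H] [H'|H'].
  - left; eapply Gstar_trans; eauto.
  - right; eapply Gstar_trans; eauto.
  - right; eapply Gstar_trans; eauto. apply Gstar_swap; auto.
  - left; eapply Gstar_trans; eauto. apply Gstar_swap in H'; auto.
    rewrite swap_swap in H'; exact H'.
Qed.

Lemma sc_swap_r V E : undirected V E -> forall e f, @sc V E e (swap f) -> sc E e f.
Proof.
  intros HU e f [H|H]; [right|left]; auto. rewrite swap_swap in H; auto.
Qed.

Lemma sc_swap_r' V E : undirected V E -> forall e f, @sc V E e f -> sc E e (swap f).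
Proof.
  intros HU e f H; apply (sc_swap_r V E HU e (swap f)); rewrite swap_swap; auto.
Qed.

Lemma sc_swap_l V E : undirected V E -> forall e f, @sc V E (swap e) f -> sc E e f.
Proof.
  intros HU e f H. apply sc_sym in H; auto. apply sc_sym; auto.
  apply (sc_trans V E HU f (swap e) e H). right; apply rt_refl.
Qed.

Lemma sc_swap_l' V E : undirected V E -> forall e f, @sc V E e f -> sc E (swap e) f.
Proof.
  intros HU e f H; apply (sc_swap_l V E HU (swap e) f); rewrite swap_swap; auto.
Qed.

Lemma InM_sc V E S : undirected V E -> forall e f, @sc V E e f -> InM E S f -> InM E S e.
Proof.
  intros HU e f H [a [b [ha [hb [hab h]]]]]; exists a, b; repeat split; auto.
  eapply sc_trans; eauto.
Qed.

Lemma InM_swap V E S : undirected V E -> forall a b, @InM V E S (a, b) -> InM E S (b, a).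
Proof.
  intros HU a b H; eapply InM_sc; eauto. apply (sc_swap_l' V E HU (a,b)). apply sc_refl.
Qed.

Lemma InM_edge V E S : forall a b, S a -> S b -> a <> b -> @InM V E S (a, b).
Proof. intros a b ha hb hab; exists a, b; repeat split; auto; apply sc_refl. Qed.

Lemma simplex_E V E S : simplex V E S -> forall a b, S a -> S b -> a <> b -> E a b.
Proof. intros [_ [H _]]; auto. Qed.

Lemma simplex_rb V E S : undirected V E -> simplex V E S ->
  forall a b c d, S a -> S b -> S c -> S d -> a <> b -> c <> d ->
  sc E (a, b) (c, d) -> (a = c /\ b = d) \/ (a = d /\ b = c).
Proof.
  intros HU HS a b c d ha hb hc hd hab hcd H.
  destruct HS as [_ [HE HR]]. apply HR; auto.
  assert (Ecd : E c d) by auto.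
  destruct H as [H|H].
  - left; split; [exact Ecd|]. apply Gstar_sym; auto.
  - right; split; [unfold edge, swap; simpl; apply HU; auto|]. apply Gstar_sym; auto.
Qed.

Lemma multiplex_iff V E S : undirected V E -> forall f,
  multiplex V E S f <-> edge V E f /\ InM E S f.
Proof.
  intros HU [x y]; split.
  - intros [a [b [ha [hb [hab [[h1 h2]|[h1 h2]]]]]]].
    + split; auto. exists a, b; repeat split; auto. left; auto.
    + split. { unfold edge, swap in *; simpl in *; apply HU; auto. }
      exists a, b; repeat split; auto. right. apply Gstar_swap' ; auto.
  - intros [he [a [b [ha [hb [hab [h|h]]]]]]]; exists a, b; repeat split; auto.
    + left; split; auto.
    + right; split. { unfold edge, swap in *; simpl in *; apply HU; auto. }
      apply Gstar_swap in h; auto.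
Qed.

Lemma tri V E : undirected V E -> forall a b0 c0,
  E a b0 -> E a c0 -> ~ sc E (a, b0) (b0, c0) -> ~ sc E (a, c0) (b0, c0) ->
  forall f, Gstar E (b0, c0) f ->
  E a (fst f) /\ E a (snd f) /\ Gstar E (a, fst f) (a, b0) /\ Gstar E (a, snd f) (a, c0).
Proof.
  intros HU a b0 c0 hb hc n1 n2 f H.
  apply clos_rt_rtn1 in H.
  induction H as [|y z Hyz Hrt IH].
  - simpl; repeat split; auto; apply rt_refl.
  - assert (Hz : Gstar E (b0, c0) z).
    { eapply rt_trans. apply clos_rtn1_rt; exact Hrt. apply rt_step; exact Hyz. }
    destruct y as [x1 y1], z as [x2 y2]; simpl in *.
    destruct IH as [h1 [h2 [h3 h4]]].
    pose proof Hyz as Hg.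
    destruct Hyz as [e1 [e2 [[q n]|[q n]]]]; unfold edge in *; simpl in *; [subst x2|subst y2].
    + assert (Ha : E a y2).
      { apply NNPP; intro na. apply n1. right. simpl.
        assert (G1 : Gstar E (x1, a) (x1, y2)).
        { apply rt_step. repeat split; unfold edge; simpl; auto. apply HU; auto. }
        assert (G2 : Gstar E (x1, a) (b0, a)).
        { apply (Gstar_swap V E HU (a, x1) (a, b0)); auto. }
        apply Gstar_swap'; auto. simpl.
        eapply Gstar_trans. apply Gstar_sym; auto. exact G2.
        eapply Gstar_trans. exact G1. apply Gstar_sym; auto. }
      repeat split; auto.
      eapply Gstar_trans; [|exact h4]. apply rt_step.
      repeat split; unfold edge; simpl; auto.
      first [ left; split; [reflexivity| intro X; apply n; apply (proj2 HU); auto] | right; split; [reflexivity| intro X; apply n; apply (proj2 HU); auto] ].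
    + assert (Ha : E a x2).
      { apply NNPP; intro na. apply n2. left.
        assert (G1 : Gstar E (a, y1) (x2, y1)).
        { apply rt_step. repeat split; unfold edge; simpl; auto. }
        eapply Gstar_trans. apply Gstar_sym; auto. exact h4.
        eapply Gstar_trans. exact G1. apply Gstar_sym; auto. }
      repeat split; auto.
      eapply Gstar_trans; [|exact h3]. apply rt_step.
      repeat split; unfold edge; simpl; auto.
      first [ left; split; [reflexivity| intro X; apply n; apply (proj2 HU); auto] | right; split; [reflexivity| intro X; apply n; apply (proj2 HU); auto] ].
Qed.

Lemma tri_sc V E : undirected V E -> forall a b0 c0,
  E a b0 -> E a c0 -> ~ sc E (a, b0) (b0, c0) -> ~ sc E (a, c0) (b0, c0) ->
  forall f, sc E f (b0, c0) ->
  E a (fst f) /\ E a (snd f) /\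
  ((sc E (a, fst f) (a, b0) /\ sc E (a, snd f) (a, c0)) \/
   (sc E (a, fst f) (a, c0) /\ sc E (a, snd f) (a, b0))).
Proof.
  intros HU a b0 c0 hb hc n1 n2 f [H|H].
  - destruct (tri V E HU a b0 c0 hb hc n1 n2 f) as [x1 [x2 [x3 x4]]].
    apply Gstar_sym; auto.
    repeat split; auto. left; split; left; auto.
  - simpl in H.
    destruct (tri V E HU a c0 b0 hc hb) with (f := f) as [x1 [x2 [x3 x4]]].
    + intro h; apply n2. apply sc_swap_r; auto.
    + intro h; apply n1. apply sc_swap_r; auto.
    + apply Gstar_sym; auto.
    + repeat split; auto. right; split; left; auto.
Qed.

Lemma apexS V E S : undirected V E -> simplex V E S ->
  forall w a b, S w -> S a -> S b -> w <> a -> w <> b -> a <> b ->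
  forall f, sc E f (a, b) ->
  E w (fst f) /\ E w (snd f) /\
  ((sc E (w, fst f) (w, a) /\ sc E (w, snd f) (w, b)) \/
   (sc E (w, fst f) (w, b) /\ sc E (w, snd f) (w, a))).
Proof.
  intros HU HS w a b hw ha hb hwa hwb hab f H.
  apply tri_sc; auto.
  - eapply simplex_E; eauto.
  - eapply simplex_E; eauto.
  - intro h. destruct (simplex_rb V E S HU HS w a a b) as [[? ?]|[? ?]]; auto.
  - intro h. destruct (simplex_rb V E S HU HS w b a b) as [[? ?]|[? ?]]; auto.
Qed.

Lemma cc_sc V E : undirected V E -> forall e f, color_class V E e f -> sc E e f.
Proof.
  intros HU e f [[_ g]|[_ g]].
  - left; apply Gstar_sym; auto.
  - right; apply Gstar_sym; auto.
Qed.

Lemma core V E S : undirected V E -> maximal_simplex V E S ->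
  forall t0 t1 u, S t0 -> S t1 -> t0 <> t1 -> E u t0 -> E u t1 ->
  ~ sc E (u, t0) (u, t1) -> ~ sc E (u, t0) (t0, t1) -> ~ sc E (u, t1) (t0, t1) ->
  InM E S (u, t0).
Proof.
  intros HU [HS Hmax] t0 t1 u h0 h1 h01 Eu0 Eu1 Hr1 Hr2 Hr3.
  apply NNPP; intro H0.
  assert (nSu : ~ S u).
  { intro hu. apply H0. apply InM_edge; auto. intro q; rewrite q in Eu0; apply (proj1 HU t0); auto. }
  assert (Eall : forall s, S s -> E u s).
  { intros s hs. destruct (classic (s = t0)) as [->|hst]; auto.
    apply NNPP; intro ne. apply H0. apply InM_sc with (f := (s, t0)); auto.
    - left; apply rt_step. repeat split; unfold edge; simpl; auto.
      eapply simplex_E; eauto.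
    - apply InM_edge; auto. }
  assert (Hc : ~ InM E S (u, t1)).
  { assert (K : forall b, S b -> b <> t1 -> sc E (u, t1) (t1, b) -> False).
    { intros b hb hbt h. destruct (classic (b = t0)) as [->|hb0].
      - apply Hr3. apply (sc_swap_r V E HU (u, t1) (t0, t1)); exact h.
      - destruct (apexS V E S HU HS t0 t1 b) with (f := (u, t1))
          as [_ [_ [[k1 _]|[k1 _]]]]; auto; simpl in k1.
        + apply Hr2. apply (sc_swap_l V E HU (u, t0)); exact k1.
        + apply H0. apply InM_sc with (f := (t0, b)); auto.
          * apply (sc_swap_l V E HU (u, t0)); exact k1.
          * apply InM_edge; auto. }
    intros [a [b [ha [hb [hab h]]]]].
    destruct (classic (a = t1)) as [->|hat].
    { apply (K b); auto. }
    destruct (classic (b = t1)) as [->|hbt].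
    { apply (K a); auto. apply (sc_swap_r' V E HU _ (a, t1)); exact h. }
    destruct (apexS V E S HU HS t1 a b) with (f := (u, t1)) as [_ [k _]]; auto.
    simpl in k. apply (proj1 HU t1); auto. }
  assert (Hd : forall s, S s -> ~ InM E S (u, s)).
  { intros s hs. destruct (classic (s = t0)) as [->|hs0]; auto.
    destruct (classic (s = t1)) as [->|hs1]; auto.
    assert (K : forall b, S b -> b <> s -> sc E (u, s) (s, b) -> False).
    { intros b hb hbs h. destruct (classic (b = t0)) as [->|hb0].
      - destruct (apexS V E S HU HS t1 s t0) with (f := (u, s))
          as [_ [_ [[k1 _]|[k1 _]]]]; auto; simpl in k1.
        + apply Hc. apply InM_sc with (f := (t1, s)); auto.
          * apply (sc_swap_l V E HU (u, t1)); exact k1.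
          * apply InM_edge; auto.
        + apply Hr3. apply (sc_swap_r V E HU (u, t1) (t0, t1)).
          apply (sc_swap_l V E HU (u, t1)); exact k1.
      - destruct (apexS V E S HU HS t0 s b) with (f := (u, s))
          as [_ [_ [[k1 _]|[k1 _]]]]; auto; simpl in k1.
        + apply H0. apply InM_sc with (f := (t0, s)); auto.
          * apply (sc_swap_l V E HU (u, t0)); exact k1.
          * apply InM_edge; auto.
        + apply H0. apply InM_sc with (f := (t0, b)); auto.
          * apply (sc_swap_l V E HU (u, t0)); exact k1.
          * apply InM_edge; auto. }
    intros [a [b [ha [hb [hab h]]]]].
    destruct (classic (a = s)) as [->|hat].
    { apply (K b); auto. }
    destruct (classic (b = s)) as [->|hbt].
    { apply (K a); auto. apply (sc_swap_r' V E HU _ (a, s)); exact h. }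
    destruct (apexS V E S HU HS s a b) with (f := (u, s)) as [_ [k _]]; auto.
    simpl in k. apply (proj1 HU s); auto. }
  assert (He : forall s s', S s -> S s' -> s <> s' -> ~ sc E (u, s) (u, s')).
  { intros s s' hs hs' hss h.
    assert (Hv : exists v, (v = t0 \/ v = t1) /\ ~ sc E (u, v) (u, s)).
    { destruct (classic (sc E (u, t0) (u, s))) as [k|k]; [|exists t0; auto].
      exists t1; split; auto. intro k'. apply Hr1. eapply sc_trans; eauto.
      apply sc_sym; auto. }
    destruct Hv as [v [hv nv]].
    assert (hvS : S v) by (destruct hv; subst; auto).
    assert (hvs : v <> s) by (intro; subst; apply nv; apply sc_refl).
    assert (hvs' : v <> s') by (intro; subst; apply nv; apply sc_sym; auto).
    destruct (tri_sc V E HU v u s) with (f := (u, s')) as [_ [_ [[_ k]|[_ k]]]];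
      simpl in *.
    - apply (proj2 HU); auto.
    - eapply simplex_E; eauto.
    - intro k; apply nv; apply (sc_swap_l V E HU (u, v)); exact k.
    - intro k; apply (Hd s hs). apply InM_sc with (f := (v, s)); auto.
      + apply sc_sym; auto.
      + apply InM_edge; auto.
    - apply sc_sym; auto.
    - destruct (simplex_rb V E S HU HS v s' v s) as [[? ?]|[? ?]]; auto.
    - apply (Hd v hvS). apply InM_sc with (f := (v, s')); auto.
      + apply (sc_swap_l V E HU (u, v)). apply sc_sym; auto.
      + apply InM_edge; auto. }
  pose proof HS as HS0.
  destruct HS0 as [[l [Hnd [Hlen Hl]]] [HE HR]].
  apply Hmax. exists (fun z => z = u \/ S z).
  split; [|split; [intros; right; auto| exists u; split; auto]].
  split; [|split].
  - exists (u :: l). split; [|split].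
    + constructor; auto. intro hi; apply nSu; apply Hl; auto.
    + simpl; auto.
    + intro x; simpl; split.
      * intros [hx|hx]; [left; auto|right; apply Hl; auto].
      * intros [hx|hx]; [left; auto|right; apply Hl; auto].
  - intros a b [->|ha] [->|hb] hab.
    + contradiction.
    + apply Eall; auto.
    + apply (proj2 HU); apply Eall; auto.
    + apply HE; auto.
  - intros a b c d ha hb hc hd hab hcd hcol.
    apply cc_sc in hcol; auto.
    destruct ha as [->|ha]; destruct hb as [->|hb];
    destruct hc as [->|hc]; destruct hd as [->|hd];
    try contradiction.
    +
      destruct (classic (b = d)) as [->|nbd]; auto.
      exfalso; apply (He b d); auto.
    +
      destruct (classic (b = c)) as [->|nbc]; auto.
      exfalso; apply (He b c); auto. apply (sc_swap_r' V E HU _ (c, u)); exact hcol.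
    + exfalso; apply (Hd b hb). apply InM_sc with (f := (c, d)); auto.
      apply InM_edge; auto.
    +
      destruct (classic (a = d)) as [->|nad]; auto.
      exfalso; apply (He a d); auto. apply (sc_swap_l V E HU (u, a)); exact hcol.
    +
      destruct (classic (a = c)) as [->|nac]; auto.
      exfalso; apply (He a c); auto. apply (sc_swap_l V E HU (u, a)).
      apply (sc_swap_r' V E HU _ (c, u)); exact hcol.
    + exfalso; apply (Hd a ha). apply InM_sc with (f := (c, d)); auto.
      * apply (sc_swap_l V E HU (u, a)); exact hcol.
      * apply InM_edge; auto.
    + exfalso; apply (Hd d hd). apply InM_sc with (f := (a, b)); auto.
      * apply sc_sym; auto.
      * apply InM_edge; auto.
    + exfalso; apply (Hd c hc). apply InM_swap; auto.
      apply InM_sc with (f := (a, b)); auto.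
      * apply sc_sym; auto.
      * apply InM_edge; auto.
    + apply (simplex_rb V E S HU HS); auto.
Qed.

Lemma star V E S S' : undirected V E -> maximal_simplex V E S -> simplex V E S' ->
  forall c d u, S' c -> S' d -> c <> d -> InM E S (c, d) ->
  S' u -> u <> c -> u <> d -> InM E S (u, c).
Proof.
  intros HU HM HS' c d u hc hd hcd [a [b [ha [hb [hab h]]]]] hu huc hud.
  assert (r1 : ~ sc E (u, c) (u, d)).
  { intro g; destruct (simplex_rb V E S' HU HS' u c u d) as [[? ?]|[? ?]]; auto. }
  assert (r2 : ~ sc E (u, c) (c, d)).
  { intro g; destruct (simplex_rb V E S' HU HS' u c c d) as [[? ?]|[? ?]]; auto. }
  assert (r3 : ~ sc E (u, d) (c, d)).
  { intro g; destruct (simplex_rb V E S' HU HS' u d c d) as [[? ?]|[? ?]]; auto. }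
  assert (h' : sc E (a, b) (c, d)) by (apply sc_sym; auto).
  assert (Euc : E u c) by (eapply simplex_E; eauto).
  assert (Eud : E u d) by (eapply simplex_E; eauto).
  assert (h'' : sc E (b, a) (c, d)) by (apply (sc_swap_l' V E HU (a, b)); auto).
  destruct (tri_sc V E HU u c d) with (f := (a, b)) as [Ea [Eb [[k1 k2]|[k1 k2]]]];
    simpl in *; auto.
  - apply (InM_sc V E S HU _ (u, a)); [apply (sc_sym V E HU _ _ k1)|].
    destruct HM as [HS Hmx].
    apply (core V E S HU (conj HS Hmx) a b u); auto.
    + intro g; apply r1; exact (sc_trans V E HU _ _ _ (sc_sym V E HU _ _ k1) (sc_trans V E HU _ _ _ g k2)).
    + intro g; apply r2; exact (sc_trans V E HU _ _ _ (sc_sym V E HU _ _ k1) (sc_trans V E HU _ _ _ g h')).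
    + intro g; apply r3; exact (sc_trans V E HU _ _ _ (sc_sym V E HU _ _ k2) (sc_trans V E HU _ _ _ g h')).
  - apply (InM_sc V E S HU _ (u, b)); [apply (sc_sym V E HU _ _ k2)|].
    destruct HM as [HS Hmx].
    apply (core V E S HU (conj HS Hmx) b a u); auto.
    + intro g; apply r1; exact (sc_trans V E HU _ _ _ (sc_sym V E HU _ _ k2) (sc_trans V E HU _ _ _ g k1)).
    + intro g; apply r2; exact (sc_trans V E HU _ _ _ (sc_sym V E HU _ _ k2) (sc_trans V E HU _ _ _ g h'')).
    + intro g; apply r3; exact (sc_trans V E HU _ _ _ (sc_sym V E HU _ _ k1) (sc_trans V E HU _ _ _ g h'')).
Qed.

Lemma allEdges V E S S' : undirected V E -> maximal_simplex V E S -> simplex V E S' ->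
  forall c d, S' c -> S' d -> c <> d -> InM E S (c, d) ->
  forall x y, S' x -> S' y -> x <> y -> InM E S (x, y).
Proof.
  intros HU HM HS' c d hc hd hcd H x y hx hy hxy.
  assert (H' : InM E S (d, c)) by (apply InM_swap; auto).
  destruct (classic (x = c)) as [->|hxc].
  { destruct (classic (y = d)) as [->|hyd]; auto.
    apply InM_swap; auto. apply (star V E S S' HU HM HS' c d y); auto. }
  destruct (classic (x = d)) as [->|hxd].
  { destruct (classic (y = c)) as [->|hyc]; auto.
    apply InM_swap; auto. apply (star V E S S' HU HM HS' d c y); auto. }
  assert (Hx : InM E S (x, c)) by (apply (star V E S S' HU HM HS' c d x); auto).
  destruct (classic (y = c)) as [->|hyc]; auto.
  apply InM_swap; auto. apply (star V E S S' HU HM HS' x c y); auto.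
Qed.

Lemma incl V E S S' : undirected V E -> maximal_simplex V E S -> simplex V E S' ->
  (exists f, multiplex V E S f /\ multiplex V E S' f) ->
  forall f, multiplex V E S' f -> multiplex V E S f.
Proof.
  intros HU HM HS' [f0 [m1 m2]] f mf.
  apply multiplex_iff in m1; auto. apply multiplex_iff in m2; auto.
  apply multiplex_iff in mf; auto. apply multiplex_iff; auto.
  destruct m1 as [_ i1]. destruct m2 as [_ [c [d [hc [hd [hcd g]]]]]].
  destruct mf as [ef [x [y [hx [hy [hxy g']]]]]].
  split; auto.
  apply InM_sc with (f := (x, y)); auto.
  apply (allEdges V E S S' HU HM HS' c d); auto.
  apply InM_sc with (f := f0); auto. apply sc_sym; auto.
Qed.

Theorem corollary4p7 (V : Type) (E : V -> V -> Prop) (S S' : V -> Prop) :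
  undirected V E ->
  maximal_simplex V E S -> maximal_simplex V E S' ->
  (exists f, multiplex V E S f /\ multiplex V E S' f) ->
  forall f, multiplex V E S f <-> multiplex V E S' f.
Proof.
  intros HU HM HM' Hex f; split.
  - apply (incl V E S' S HU HM' (proj1 HM)).
    destruct Hex as [g [m1 m2]]; exists g; auto.
  - apply (incl V E S S' HU HM (proj1 HM') Hex).
Qed.
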